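(* Let $p,q\in\mathbb{N}$ be co-prime. Then the directed graph (finite state automaton) $(G,E)_{p/q}$ is strongly connected, i.e. for every pair of vertices $a,b\in G$ there is a directed path in $E$ from $a$ to $b$.
   Context: Let $D=\{0,1,p/q\}$. The automaton $(G,E)_{p/q}$ has vertex set $G=\{-q+1,-q+2,\dots,-1,0,1,\dots,q-1\}$ and (directed) edge set $E=\{(a,b)\in G\times G:\ \exists\,x,y\in D \text{ with } 2a+(x-y)q=b\}$, the edge $(a,b)$ going from $a$ to $b$. *)

(* Defs.v *)
From mathcomp Require Import all_boot all_order all_algebra.
From Stdlib Require Import Relations.
Set Implicit Arguments. Unset Strict Implicit. Unset Printing Implicit Defensive.
Import Order.TTheory GRing.Theory Num.Theory.
Local Open Scope ring_scope.

Definition digitD (p q : nat) (x : rat) : Prop :=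
  x = 0 \/ x = 1 \/ x = (p%:Q / q%:Q).

Definition vertG (q : nat) (a : int) : Prop :=
  - (q%:Z) + 1 <= a /\ a <= (q%:Z) - 1.

Definition edgeE (p q : nat) (a b : int) : Prop :=
  vertG q a /\ vertG q b /\
  exists x y : rat, digitD p q x /\ digitD p q y /\
    2%:Q * a%:~R + (x - y) * q%:Q = b%:~R.

Definition dpath (p q : nat) (a b : int) : Prop :=
  clos_refl_trans_1n int (edgeE p q) a b.

(* Main.v *)
Require Import Defs.
From mathcomp Require Import all_boot all_order all_algebra zify ring.
From Stdlib Require Import Relations.
Import Order.TTheory GRing.Theory Num.Theory.
Local Open Scope ring_scope.

Lemma edge_step (p q : nat) (m c : int) (e f : bool) :
  (p < q)%N -> vertG q m -> vertG q c ->
  c = 2 * m + (e%:Z * p%:Z - f%:Z * q%:Z) -> edgeE p q m c.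
Proof.
move=> hpq hm hc hce; split; first exact: hm; split; first exact: hc; clear hc; subst c.
have hq' : q%:Q != 0 by rewrite intr_eq0 eqz_nat; lia.
exists (if e then p%:Q / q%:Q else 0), (if f then 1 else 0).
split; first by case: (e); rewrite /digitD; auto.
split; first by case: (f); rewrite /digitD; auto.
case: e; case: f => /=; field => //.
Qed.

Lemma chain (p q : nat) (n : nat) : (p < q)%N -> forall (a b : nat) (c : int),
  (a < 2 ^ n)%N -> (b < 2 ^ n)%N -> vertG q c ->
  vertG q ((2 ^ n)%:Z * c + a%:Z * p%:Z - b%:Z * q%:Z) ->
  dpath p q c ((2 ^ n)%:Z * c + a%:Z * p%:Z - b%:Z * q%:Z).
Proof.
move=> hpq; elim: n => [|n IH] a b c.
  rewrite expn0 => ha hb _ _.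
  have -> : a = 0%N by lia.
  have -> : b = 0%N by lia.
  rewrite mul1r !mul0r subr0 addr0; exact: rt1n_refl.
move=> ha hb hc hc'.
have [e he] : exists e : bool, a = (2 * (a %/ 2) + e)%N.
  by exists (odd a); rewrite -modn2; lia.
have [f hf] : exists f : bool, b = (2 * (b %/ 2) + f)%N.
  by exists (odd b); rewrite -modn2; lia.
set a' := (a %/ 2)%N in he; set b' := (b %/ 2)%N in hf.
rewrite expnS in ha hb hc' *.
set N := (2 ^ n)%N in ha hb hc' IH *.
set m := N%:Z * c + a'%:Z * p%:Z - b'%:Z * q%:Z.
have E : (2 * N)%N%:Z * c + a%:Z * p%:Z - b%:Z * q%:Z =
   2 * m + (e%:Z * p%:Z - f%:Z * q%:Z).
  rewrite /m he hf !PoszD ?PoszM; ring.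
rewrite E in hc' *.
have hm : vertG q m.
  move: hc'; rewrite /vertG; have : (e <= 1)%N by case: (e). have : (f <= 1)%N by case: (f). lia.
apply: clos_rt_rt1n; apply: (@rt_trans _ _ _ m).
  apply: clos_rt1n_rt; apply: IH => //; lia.
apply: rt_step; exact: edge_step.
Qed.

Lemma edge_neg (p q : nat) (a b : int) : edgeE p q a b -> edgeE p q (- a) (- b).
Proof.
move=> [ha [hb [x [y [hx [hy E]]]]]].
split; first by move: ha; rewrite /vertG; lia.
split; first by move: hb; rewrite /vertG; lia.
exists y, x; split => //; split => //.
rewrite !intrN -E; ring.
Qed.

Lemma dpath_neg (p q : nat) (a b : int) : dpath p q a b -> dpath p q (- a) (- b).
Proof.
elim => [x|x y z hxy _ IH]; first exact: rt1n_refl.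
apply: Relation_Operators.rt1n_trans IH; exact: edge_neg.
Qed.

Lemma bez (p q : nat) : coprime p q -> exists u v : int, u * p%:Z + v * q%:Z = 1.
Proof.
move=> h; have : coprimez p q by rewrite coprimezE.
by move/coprimezP => [[u v] /= huv]; exists u, v.
Qed.

Lemma partA (p q : nat) (hcop : coprime p q) (hpq : (p < q)%N) (b : int) :
  vertG q b -> dpath p q 0 b.
Proof.
move=> hb.
have [u [v huv]] := @bez p q hcop.
have q0 : q%:Z != 0 by lia.
set k := ((b * u) %/ q)%Z.
set al := ((b * u) %% q)%Z.
have hal0 : 0 <= al by apply: modz_ge0.
have hal1 : al < q%:Z by have := ltz_mod (b * u) q0; lia.
have hdiv : b * u = k * q%:Z + al by rewrite /k /al -divz_eq.
set be := - (k * p%:Z + b * v).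
have hE : al * p%:Z - be * q%:Z = b.
  have -> : al = b * u - k * q%:Z by lia.
  rewrite /be; transitivity (b * (u * p%:Z + v * q%:Z)); last by rewrite huv mulr1.
  ring.
have hbe0 : 0 <= be.
  have : be * q%:Z > - q%:Z.
    have : 0 <= al * p%:Z by apply: mulr_ge0; lia.
    move: hb; rewrite /vertG; lia.
  nia.
have [a' ha'] : exists n : nat, al = n by exists (absz al); lia.
have [b' hb'] : exists n : nat, be = n by exists (absz be); lia.
have := @chain p q (a' + b') hpq a' b' 0.
rewrite mulr0 add0r -ha' -hb' hE; apply.
- have := @ltn_expl 2 (a' + b') isT; lia.
- have := @ltn_expl 2 (a' + b') isT; lia.
- rewrite /vertG; lia.
- done.
Qed.

Lemma partB (p q : nat) (hcop : coprime p q) (hpq : (p < q)%N) (a : int) :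
  vertG q a -> 0 <= a -> dpath p q a 0.
Proof.
move=> ha ha0.
have [u [v huv]] := @bez p q hcop.
have q0 : q%:Z != 0 by lia.
set n := (q * p + q)%N.
set N := (2 ^ n)%N.
have hN : (n < N)%N by apply: ltn_expl.
set c := - (N%:Z * a).
set k := ((c * u) %/ q)%Z.
set al := ((c * u) %% q)%Z.
have hal0 : 0 <= al by apply: modz_ge0.
have hal1 : al < q%:Z by have := ltz_mod (c * u) q0; lia.
have hdiv : c * u = k * q%:Z + al by rewrite /k /al -divz_eq.
set be := - (k * p%:Z + c * v).
have hE : al * p%:Z - be * q%:Z = c.
  have -> : al = c * u - k * q%:Z by lia.
  rewrite /be; transitivity (c * (u * p%:Z + v * q%:Z)); last by rewrite huv mulr1.
  ring.
have hbq : be * q%:Z = al * p%:Z + N%:Z * a by rewrite /c in hE; lia.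
have hbe0 : 0 <= be.
  have : 0 <= al * p%:Z by apply: mulr_ge0; lia.
  have : 0 <= N%:Z * a by apply: mulr_ge0; lia.
  nia.
have hbeN : be < N%:Z.
  have h1 : al * p%:Z <= (q%:Z - 1) * p%:Z by apply: ler_wpM2r; lia.
  have h2 : N%:Z * a <= N%:Z * (q%:Z - 1) by apply: ler_wpM2l; move: ha; rewrite /vertG; lia.
  have h3 : (q%:Z - 1) * p%:Z < N%:Z by lia.
  have h4 : be * q%:Z < N%:Z * q%:Z by lia.
  nia.
have [a' ha'] : exists n : nat, al = n by exists (absz al); lia.
have [b' hb'] : exists n : nat, be = n by exists (absz be); lia.
have := @chain p q n hpq a' b' a.
have -> : N%:Z * a + a'%:Z * p%:Z - b'%:Z * q%:Z = 0.
  rewrite -ha' -hb'; rewrite /c in hE; lia.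
apply => //; rewrite /vertG; lia.
Qed.

Theorem theorem5p2 (p q : nat) (hcop : coprime p q) (hpq : (p < q)%N) :
  forall a b : int, vertG q a -> vertG q b -> dpath p q a b.
Proof.
move=> a b ha hb.
have h1 : dpath p q a 0.
  case: (lerP 0 a) => h; first exact: partB.
  rewrite -(opprK a) -oppr0; apply: dpath_neg; apply: partB => //.
    by move: ha; rewrite /vertG; lia.
  lia.
apply: clos_rt_rt1n; apply: (@rt_trans _ _ _ 0); apply: clos_rt1n_rt => //.
exact: partA.
Qed.
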